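(* Let $X$ be a compactum and define $l X: M_\cup X\to I^{C(X,I)}$ by $$lX(\nu)(\varphi)=\max\{\nu(\varphi^{-1}([s,1]))\cdot s: s\in(0,1]\},\qquad \nu\in M_\cup X,\ \varphi\in C(X,I).$$ Let $SX\subset I^{C(X,I)}$ be the set of all functionals $\upsilon: C(X,I)\to I$ such that (1) $\upsilon(1_X)=1$, where $1_X$ is the constant function $1$; (2) $\upsilon(\lambda\cdot\varphi)=\lambda\cdot\upsilon(\varphi)$ for all $\lambda\in I$ and $\varphi\in C(X,I)$; (3) $\upsilon(\max\{\psi,\varphi\})=\max\{\upsilon(\psi),\upsilon(\varphi)\}$ for all $\psi,\varphi\in C(X,I)$ (maximum taken pointwise on the left). Then $lX(M_\cup X)=SX$.
   Context: A compactum is a compact Hausdorff space; $I=[0,1]$; $C(X,I)$ is the set of continuous maps $X\to I$. An (upper-semicontinuous) capacity on a compactum $X$ is a function $\nu$ from the closed subsets of $X$ to $I$ such that: (1) $\nu(X)=1$, $\nu(\emptyset)=0$; (2) if $F\subset G$ then $\nu(F)\le\nu(G)$; (3) if $\nu(F)<a$ then there is an open set $O\supset F$ with $\nu(B)<a$ for every closed $B\subset O$. A capacity $\nu$ is a possibility capacity if $\nu(A\cup B)=\max\{\nu(A),\nu(B)\}$ for all closed $A,B\subset X$; $M_\cup X$ denotes the set of possibility capacities on $X$. (The maximum in the definition of $lX$ exists.) *)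

(* Defs.v *)
From Stdlib Require Import Reals List.
Open Scope R_scope.

Definition subset {X : Type} (A B : X -> Prop) : Prop := forall x, A x -> B x.
Definition fullset {X : Type} : X -> Prop := fun _ => True.
Definition emptyset {X : Type} : X -> Prop := fun _ => False.
Definition setU {X : Type} (A B : X -> Prop) : X -> Prop := fun x => A x \/ B x.

Definition is_topology {X : Type} (op : (X -> Prop) -> Prop) : Prop :=
  op fullset /\ op emptyset /\
  (forall U V, op U -> op V -> op (fun x => U x /\ V x)) /\
  (forall F : (X -> Prop) -> Prop, (forall U, F U -> op U) ->
     op (fun x => exists U, F U /\ U x)).

Definition is_closed {X : Type} (op : (X -> Prop) -> Prop) (A : X -> Prop) : Prop :=
  op (fun x => ~ A x).

Definition is_compact {X : Type} (op : (X -> Prop) -> Prop) : Prop :=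
  forall C : (X -> Prop) -> Prop,
    (forall U, C U -> op U) -> (forall x, exists U, C U /\ U x) ->
    exists l : list (X -> Prop),
      (forall U, In U l -> C U) /\ (forall x, exists U, In U l /\ U x).

Definition is_hausdorff {X : Type} (op : (X -> Prop) -> Prop) : Prop :=
  forall x y : X, x <> y -> exists U V, op U /\ op V /\ U x /\ V y /\
    (forall z, ~ (U z /\ V z)).

Definition compactum {X : Type} (op : (X -> Prop) -> Prop) : Prop :=
  is_topology op /\ is_compact op /\ is_hausdorff op.

Definition R_open (U : R -> Prop) : Prop :=
  forall x, U x -> exists eps, eps > 0 /\ forall y, Rabs (y - x) < eps -> U y.

Definition in_CXI {X : Type} (op : (X -> Prop) -> Prop) (phi : X -> R) : Prop :=
  (forall x, 0 <= phi x <= 1) /\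
  (forall U, R_open U -> op (fun x => U (phi x))).

(* Upper-semicontinuous capacity; nu is only relevant on closed sets. *)
Definition is_capacity {X : Type} (op : (X -> Prop) -> Prop)
    (nu : (X -> Prop) -> R) : Prop :=
  (forall F, is_closed op F -> 0 <= nu F <= 1) /\
  nu fullset = 1 /\ nu emptyset = 0 /\
  (forall F G, is_closed op F -> is_closed op G -> subset F G -> nu F <= nu G) /\
  (forall F a, is_closed op F -> nu F < a ->
     exists O, op O /\ subset F O /\
       forall B, is_closed op B -> subset B O -> nu B < a).

Definition is_possibility {X : Type} (op : (X -> Prop) -> Prop)
    (nu : (X -> Prop) -> R) : Prop :=
  is_capacity op nu /\
  forall A B, is_closed op A -> is_closed op B ->
    nu (setU A B) = Rmax (nu A) (nu B).

Definition lX_val {X : Type} (nu : (X -> Prop) -> R) (phi : X -> R) (r : R) : Prop :=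
  (exists s, 0 < s <= 1 /\ r = nu (fun x => s <= phi x <= 1) * s) /\
  (forall s, 0 < s <= 1 -> nu (fun x => s <= phi x <= 1) * s <= r).

Definition in_SX {X : Type} (op : (X -> Prop) -> Prop) (ups : (X -> R) -> R) : Prop :=
  (forall phi, in_CXI op phi -> 0 <= ups phi <= 1) /\
  ups (fun _ => 1) = 1 /\
  (forall lam phi, 0 <= lam <= 1 -> in_CXI op phi ->
     ups (fun x => lam * phi x) = lam * ups phi) /\
  (forall psi phi, in_CXI op psi -> in_CXI op phi ->
     ups (fun x => Rmax (psi x) (phi x)) = Rmax (ups psi) (ups phi)).

(* Main.v *)
Require Import Defs.
From Stdlib Require Import Reals List Lra Lia.
From Stdlib Require Import FunctionalExtensionality PropExtensionality ClassicalEpsilon Classical.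
Open Scope R_scope.

Lemma pred_ext {X : Type} (A B : X -> Prop) : (forall x, A x <-> B x) -> A = B.
Proof. intros H; apply functional_extensionality; intros x; apply propositional_extensionality; auto. Qed.

Lemma open_local {X : Type} (op : (X->Prop)->Prop) (hT : is_topology op) (A : X -> Prop) :
  (forall x, A x -> exists V, op V /\ V x /\ subset V A) -> op A.
Proof.
  intros H. destruct hT as [_ [_ [_ hU]]].
  assert (E : A = (fun x => exists U, (op U /\ subset U A) /\ U x)).
  { apply pred_ext; intros x; split.
    - intros Ax. destruct (H x Ax) as [V [oV [Vx sV]]]. exists V; auto.
    - intros [U [[_ sU] Ux]]. apply sU; auto. }
  rewrite E. apply hU. intros U [oU _]; exact oU.
Qed.

Lemma ball_open (a d : R) : R_open (fun y => Rabs (y - a) < d).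
Proof.
  intros y hy. exists (d - Rabs (y - a)). split; [lra|].
  intros z hz. replace (z - a) with ((z - y) + (y - a)) by ring.
  pose proof (Rabs_triang (z - y) (y - a)). lra.
Qed.

Definition contf {X : Type} (op : (X->Prop)->Prop) (f : X -> R) :=
  forall U, R_open U -> op (fun x => U (f x)).

Lemma cont2 {X : Type} (op : (X->Prop)->Prop) (hT : is_topology op) (a b m : X -> R) :
  contf op a -> contf op b ->
  (forall x0 eps, eps > 0 -> exists d, d > 0 /\ forall x,
      Rabs (a x - a x0) < d -> Rabs (b x - b x0) < d -> Rabs (m x - m x0) < eps) ->
  contf op m.
Proof.
  intros ha hb hm U hU. apply open_local; auto.
  intros x0 Ux0. destruct (hU _ Ux0) as [eps [he hball]].
  destruct (hm x0 eps he) as [d [hd hmd]].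
  exists (fun x => Rabs (a x - a x0) < d /\ Rabs (b x - b x0) < d).
  split; [| split].
  - destruct hT as [_ [_ [hI _]]].
    apply (hI (fun x => Rabs (a x - a x0) < d) (fun x => Rabs (b x - b x0) < d)).
    + apply (ha (fun y => Rabs (y - a x0) < d)); apply ball_open.
    + apply (hb (fun y => Rabs (y - b x0) < d)); apply ball_open.
  - rewrite !Rminus_diag, Rabs_R0. lra.
  - intros x [h1 h2]. apply hball. apply hmd; auto.
Qed.

Lemma const_C {X : Type} (op : (X->Prop)->Prop) (hT : is_topology op) (c : R) :
  0 <= c <= 1 -> in_CXI op (fun _ => c).
Proof.
  intros hc. split; [intros; exact hc|]. intros U _.
  destruct hT as [hF [hE _]].
  destruct (classic (U c)) as [h|h].
  - replace (fun _ : X => U c) with (@fullset X); auto.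
    apply pred_ext; intros; unfold fullset; tauto.
  - replace (fun _ : X => U c) with (@emptyset X); auto.
    apply pred_ext; intros; unfold emptyset; tauto.
Qed.

Lemma comp_C {X : Type} (op : (X->Prop)->Prop) (hT : is_topology op) (phi : X -> R) (g : R -> R) (L : R) :
  in_CXI op phi -> (forall y, 0 <= y <= 1 -> 0 <= g y <= 1) -> L > 0 ->
  (forall y z, Rabs (g z - g y) <= L * Rabs (z - y)) -> in_CXI op (fun x => g (phi x)).
Proof.
  intros [hr hc] hg hL hl. split; [intros; apply hg; apply hr|].
  apply (cont2 op hT phi phi); auto.
  intros x0 eps he. exists (eps / L). split.
  - apply Rdiv_lt_0_compat; lra.
  - intros x h1 _. eapply Rle_lt_trans; [apply hl|].
    apply Rmult_lt_reg_r with (/ L); [apply Rinv_0_lt_compat; lra|].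
    replace (L * Rabs (phi x - phi x0) * / L) with (Rabs (phi x - phi x0)) by (field; lra).
    exact h1.
Qed.

Lemma Rmax_lip (a b a0 b0 e : R) : Rabs (a - a0) < e -> Rabs (b - b0) < e ->
  Rabs (Rmax a b - Rmax a0 b0) < e.
Proof.
  intros h1 h2. apply Rabs_def2 in h1. apply Rabs_def2 in h2.
  unfold Rmax; destruct (Rle_dec a b); destruct (Rle_dec a0 b0); apply Rabs_def1; lra.
Qed.

Lemma max_C {X : Type} (op : (X->Prop)->Prop) (hT : is_topology op) (psi phi : X -> R) :
  in_CXI op psi -> in_CXI op phi -> in_CXI op (fun x => Rmax (psi x) (phi x)).
Proof.
  intros [r1 c1] [r2 c2]. split.
  - intros x. specialize (r1 x); specialize (r2 x). unfold Rmax; destruct Rle_dec; lra.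
  - apply (cont2 op hT psi phi); auto. intros x0 eps he. exists eps; split; auto.
    intros x h1 h2. apply Rmax_lip; auto.
Qed.

Lemma scale_C {X : Type} (op : (X->Prop)->Prop) (hT : is_topology op) (lam : R) (phi : X -> R) :
  0 <= lam <= 1 -> in_CXI op phi -> in_CXI op (fun x => lam * phi x).
Proof.
  intros hl hp. apply (comp_C op hT phi (fun y => lam * y) (lam + 1)); auto; try lra.
  - intros y hy. split; [apply Rmult_le_pos; lra|]. nra.
  - intros y z. replace (lam * z - lam * y) with (lam * (z - y)) by ring.
    rewrite Rabs_mult, (Rabs_right lam) by lra.
    pose proof (Rabs_pos (z - y)). nra.
Qed.

Lemma Rmin1_lip (a b : R) : Rabs (Rmin 1 a - Rmin 1 b) <= Rabs (a - b).
Proof.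
  unfold Rmin; destruct (Rle_dec 1 a); destruct (Rle_dec 1 b);
  unfold Rabs; repeat destruct Rcase_abs; lra.
Qed.

Lemma clip_C {X : Type} (op : (X->Prop)->Prop) (hT : is_topology op) (r : R) (phi : X -> R) :
  0 < r -> in_CXI op phi -> in_CXI op (fun x => Rmin 1 (phi x / r)).
Proof.
  intros hr hp. apply (comp_C op hT phi (fun y => Rmin 1 (y / r)) (/ r)); auto.
  - intros y hy. unfold Rmin; destruct Rle_dec; [lra|]. split; [|lra].
    apply Rmult_le_pos; [lra| left; apply Rinv_0_lt_compat; lra].
  - apply Rinv_0_lt_compat; lra.
  - intros y z. eapply Rle_trans; [apply Rmin1_lip|].
    unfold Rdiv. replace (z * / r - y * / r) with (/ r * (z - y)) by ring.
    rewrite Rabs_mult, (Rabs_right (/ r)); [lra|]. left; apply Rinv_0_lt_compat; lra.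
Qed.

Lemma lt_open (t : R) : R_open (fun y => y < t).
Proof. intros y hy. exists (t - y); split; [lra|]. intros z hz. apply Rabs_def2 in hz. lra. Qed.
Lemma gt_open (t : R) : R_open (fun y => t < y).
Proof. intros y hy. exists (y - t); split; [lra|]. intros z hz. apply Rabs_def2 in hz. lra. Qed.

Lemma Fs_closed {X : Type} (op : (X->Prop)->Prop) (phi : X -> R) (s : R) :
  in_CXI op phi -> is_closed op (fun x => s <= phi x <= 1).
Proof.
  intros [_ hc]. unfold is_closed. apply (hc (fun y => ~ (s <= y <= 1))).
  intros y hy. destruct (Rlt_dec y s).
  - exists (s - y); split; [lra|]. intros z hz. apply Rabs_def2 in hz. lra.
  - exists (y - 1); split; [lra|]. intros z hz. apply Rabs_def2 in hz. lra.
Qed.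

Lemma cpt_lemma {X : Type} (op : (X->Prop)->Prop) (hX : compactum op) (phi : X -> R) (s0 : R)
  (O : X -> Prop) : in_CXI op phi -> 0 < s0 <= 1 -> op O ->
  (forall x, s0 <= phi x <= 1 -> O x) ->
  exists t, 0 < t < s0 /\ forall x, t <= phi x <= 1 -> O x.
Proof.
  intros hp hs hO hF. destruct hX as [hT [hK _]].
  set (C := fun U : X -> Prop => U = O \/ exists t, 0 < t < s0 /\ U = (fun x => phi x < t)).
  destruct (hK C) as [l [hl hcov]].
  - intros U [->|[t [_ ->]]]; auto. apply (proj2 hp (fun y => y < t)). apply lt_open.
  - intros x. destruct (classic (O x)) as [h|h].
    + exists O; split; [unfold C; left; reflexivity | exact h].
    + assert (phi x < s0).
      { destruct (Rlt_dec (phi x) s0); auto. exfalso; apply h, hF. pose proof (proj1 hp x). lra. }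
      exists (fun y => phi y < (Rmax (phi x) 0 + s0) / 2). split.
      * unfold C; right. exists ((Rmax (phi x) 0 + s0) / 2). split; auto.
        unfold Rmax; destruct Rle_dec; lra.
      * simpl. unfold Rmax; destruct Rle_dec; lra.
  - assert (Hind : forall l, (forall U, In U l -> C U) -> exists t, 0 < t < s0 /\
       forall U, In U l -> forall x, U x -> O x \/ phi x < t).
    { induction l0 as [|U l0 IH]; intros hl0.
      - exists (s0 / 2). split; [lra|]. intros U [].
      - destruct IH as [t [ht hU]]. { intros; apply hl0; right; auto. }
        destruct (hl0 U (or_introl eq_refl)) as [->|[t' [ht' ->]]].
        + exists t; split; auto. intros U' [<-|hin] x hx; [left; exact hx | exact (hU U' hin x hx)].
        + exists (Rmax t t'). split. { unfold Rmax; destruct Rle_dec; lra. }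
          intros U' [<-|hin] x hx.
          * right. unfold Rmax; destruct Rle_dec; lra.
          * destruct (hU U' hin x hx); auto. right. unfold Rmax; destruct Rle_dec; lra. }
    destruct (Hind l hl) as [t [ht hU]]. exists t; split; auto.
    intros x hx. destruct (hcov x) as [U [hin hUx]].
    destruct (hU U hin x hUx); auto. lra.
Qed.

Lemma attain (m : R -> R) (c : R) :
  (forall s, 0 < s <= 1 -> 0 <= m s <= 1) ->
  (forall s t, 0 < s <= t -> t <= 1 -> m t <= m s) ->
  (forall s0 d, 0 < s0 <= 1 -> d > 0 -> exists t, 0 < t < s0 /\ m t < m s0 + d) ->
  (forall s, 0 < s <= 1 -> m s * s <= c) ->
  (forall e, e > 0 -> exists s, 0 < s <= 1 /\ m s * s > c - e) ->
  exists s, 0 < s <= 1 /\ c = m s * s.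
Proof.
  intros H1 H2 H3 H4 H5.
  assert (cge : 0 <= c).
  { specialize (H4 1). specialize (H1 1). assert (0 < 1 <= 1) by lra. nra. }
  assert (cle : c <= 1).
  { destruct (Rle_dec c 1) as [|hn]; auto. destruct (H5 (c - 1)) as [s [hs hm]]; [lra|].
    specialize (H1 s hs). nra. }
  destruct (Req_dec c 0) as [c0|cpos].
  { exists 1. split; [lra|]. specialize (H4 1). specialize (H1 1). assert (0 < 1 <= 1) by lra. nra. }
  assert (cp : 0 < c) by lra.
  set (E := fun s => 0 < s <= 1 /\ forall e, e > 0 -> exists u, s <= u <= 1 /\ m u * u > c - e).
  assert (Ec : E (c / 2)).
  { split; [lra|]. intros e he. destruct (H5 (Rmin e (c / 2))) as [u [hu hm]].
    { unfold Rmin; destruct Rle_dec; lra. }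
    exists u. specialize (H1 u hu). split; [|unfold Rmin in hm; destruct Rle_dec in hm; lra].
    split; [|lra]. unfold Rmin in hm; destruct Rle_dec in hm; nra. }
  destruct (completeness E) as [ss [hub hlub]].
  { exists 1. intros s [hs _]. lra. }
  { exists (c / 2); auto. }
  assert (ssge : c / 2 <= ss) by (apply hub; auto).
  assert (ssle : ss <= 1). { apply hlub. intros s [hs _]. lra. }
  assert (hss : 0 < ss <= 1) by lra.
  exists ss. split; auto.
  destruct (Req_dec c (m ss * ss)) as [|hne]; auto.
  exfalso.
  assert (hlt : m ss * ss < c) by (specialize (H4 ss hss); lra).
  set (d := c - m ss * ss).
  assert (hd : d > 0) by (unfold d; lra).
  destruct (H3 ss (d / 4) hss) as [t0 [ht0 hmt0]]; [lra|].
  pose proof (H1 ss hss) as hmss.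
  assert (Hmid : forall u, t0 <= u -> u <= ss + d / 4 -> u <= 1 -> m u * u <= c - 3 * d / 4).
  { intros u h1 h2 h3. destruct (Rle_dec u ss).
    - assert (m u <= m t0) by (apply H2; lra).
      pose proof (H1 u (conj (Rlt_le_trans _ _ _ (proj1 ht0) h1) h3)).
      pose proof (H1 t0 (conj (proj1 ht0) (Rle_trans _ _ _ (Rlt_le _ _ (proj2 ht0)) ssle))).
      unfold d in *. nra.
    - assert (m u <= m ss) by (apply H2; lra).
      pose proof (H1 u (conj (Rlt_trans _ _ _ (proj1 hss) (Rnot_le_lt _ _ n)) h3)).
      unfold d in *. nra. }
  assert (hex : exists s, E s /\ t0 < s).
  { apply NNPP. intros hn. assert (ss <= t0); [|lra].
    apply hlub. intros s hs. destruct (Rle_dec s t0) as [|hn2]; auto.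
    exfalso; apply hn. exists s; split; auto; lra. }
  destruct hex as [s [[hs hE] hst]].
  assert (Hbig : forall e, e > 0 -> e <= d / 2 -> exists u, ss + d / 4 < u <= 1 /\ m u * u > c - e).
  { intros e he hed. destruct (hE e he) as [u [hu hmu]]. exists u. split; [|auto].
    split; [|lra]. destruct (Rlt_dec (ss + d / 4) u) as [|hn]; auto.
    exfalso. pose proof (Hmid u ltac:(lra) ltac:(lra) ltac:(lra)). lra. }
  assert (Enew : E (ss + d / 4)).
  { destruct (Hbig (d / 2)) as [u [hu _]]; [lra|lra|].
    split; [lra|]. intros e he. destruct (Hbig (Rmin e (d / 2))) as [u' [hu' hm']].
    { unfold Rmin; destruct Rle_dec; lra. } { unfold Rmin; destruct Rle_dec; lra. }
    exists u'. split; [lra|]. unfold Rmin in hm'; destruct Rle_dec in hm'; lra. }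
  pose proof (hub _ Enew). lra.
Qed.

Lemma lX_unique {X : Type} (nu : (X -> Prop) -> R) phi r1 r2 :
  lX_val nu phi r1 -> lX_val nu phi r2 -> r1 = r2.
Proof.
  intros [[s1 [hs1 e1]] b1] [[s2 [hs2 e2]] b2].
  pose proof (b1 s2 hs2). pose proof (b2 s1 hs1). lra.
Qed.

Lemma lX_exists1 {X : Type} (op : (X->Prop)->Prop) (hX : compactum op) nu phi :
  is_possibility op nu -> in_CXI op phi -> exists r, lX_val nu phi r.
Proof.
  intros [[hb [h1 [h0 [hmono husc]]]] _] hp.
  set (m := fun s => nu (fun x => s <= phi x <= 1)).
  destruct (completeness (fun y => exists s, 0 < s <= 1 /\ y = m s * s)) as [c [hub hlub]].
  { exists 1. intros y [s [[hs1 hs2] ->]]. pose proof (hb _ (Fs_closed op phi s hp)) as [q1 q2]. unfold m. nra. }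
  { exists (m 1 * 1). exists 1. split; auto; lra. }
  assert (Hm : exists s, 0 < s <= 1 /\ c = m s * s).
  { apply attain.
    - intros s _. apply hb, Fs_closed; auto.
    - intros s t hst ht. apply hmono; try apply Fs_closed; auto. intros x hx. lra.
    - intros s0 d hs0 hd. destruct (husc _ (m s0 + d) (Fs_closed op phi s0 hp)) as [O [hO [hFO hB]]].
      { unfold m; lra. }
      destruct (cpt_lemma op hX phi s0 O hp hs0 hO hFO) as [t [ht hFt]].
      exists t. split; auto. apply hB; auto. apply Fs_closed; auto.
    - intros s hs. apply hub. exists s; auto.
    - intros e he. apply NNPP. intros hn. assert (c <= c - e); [|lra].
      apply hlub. intros y [s [hs ->]]. destruct (Rle_dec (m s * s) (c - e)); auto.
      exfalso; apply hn; exists s; split; auto; lra. }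
  exists c. split.
  - exact Hm.
  - intros s hs. apply hub. exists s; auto.
Qed.

Definition ups1 {X : Type} (nu : (X -> Prop) -> R) (phi : X -> R) : R :=
  epsilon (inhabits 0) (fun r => lX_val nu phi r).

Lemma ups1_spec {X : Type} (op : (X->Prop)->Prop) (hX : compactum op) nu phi :
  is_possibility op nu -> in_CXI op phi -> lX_val nu phi (ups1 nu phi).
Proof. intros hn hp. unfold ups1. apply epsilon_spec. apply (lX_exists1 op hX); auto. Qed.

Lemma part1 {X : Type} (op : (X->Prop)->Prop) (hX : compactum op) nu :
  is_possibility op nu -> in_SX op (ups1 nu).
Proof.
  intros hn. pose proof hn as [[hb [h1 [h0 [hmono husc]]]] hU].
  pose proof (proj1 hX) as hT.
  split; [|split; [|split]].
  - intros phi hp. destruct (ups1_spec op hX nu phi hn hp) as [[s [hs ->]] _].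
    pose proof (hb _ (Fs_closed op phi s hp)). nra.
  - assert (hc : in_CXI op (fun _ : X => 1)) by (apply const_C; auto; lra).
    apply (lX_unique nu (fun _ => 1)); [apply (ups1_spec op); auto|].
    assert (E : forall s, 0 < s <= 1 -> (fun _ : X => s <= 1 <= 1) = fullset).
    { intros s hs. apply pred_ext; intros; unfold fullset; split; auto; lra. }
    split.
    + exists 1. split; [lra|]. rewrite E by lra. rewrite h1; ring.
    + intros s hs. rewrite E by auto. rewrite h1; lra.
  - intros lam phi hl hp.
    pose proof (ups1_spec op hX nu phi hn hp) as [[s0 [hs0 e0]] hb0].
    apply (lX_unique nu (fun x => lam * phi x)); [apply (ups1_spec op); auto; apply scale_C; auto|].
    set (c := ups1 nu phi) in *.
    assert (c0 : 0 <= c). { rewrite e0. pose proof (hb _ (Fs_closed op phi s0 hp)). nra. }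
    destruct (Req_dec lam 0) as [->|hl0].
    + assert (E : forall s, 0 < s -> (fun x => s <= 0 * phi x <= 1) = emptyset).
      { intros s hs. apply pred_ext; intros x; unfold emptyset; split; [|tauto]. intros. lra. }
      split.
      * exists 1. split; [lra|]. rewrite E by lra. rewrite h0; ring.
      * intros s hs. rewrite E by lra. rewrite h0; lra.
    + assert (hlp : 0 < lam) by lra.
      assert (E : forall s, 0 < s -> s / lam <= 1 ->
        (fun x => s <= lam * phi x <= 1) = (fun x => s / lam <= phi x <= 1)).
      { intros s hs hsl. apply pred_ext; intros x. pose proof (proj1 hp x).
        split; intros [a b]; split.
        - apply Rmult_le_reg_l with lam; auto. replace (lam * (s / lam)) with s by (field; lra). lra.
        - lra.
        - replace s with (lam * (s / lam)) by (field; lra). apply Rmult_le_compat_l; lra.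
        - nra. }
      split.
      * exists (lam * s0). split; [nra|].
        rewrite E; [| nra | replace (lam * s0 / lam) with s0 by (field; lra); lra].
        replace (lam * s0 / lam) with s0 by (field; lra). rewrite e0; ring.
      * intros s hs. destruct (Rle_dec (s / lam) 1) as [hsl|hsl].
        -- rewrite E by (auto; lra).
           assert (0 < s / lam <= 1) by (split; auto; apply Rdiv_lt_0_compat; lra).
           pose proof (hb0 (s / lam) H).
           replace (nu (fun x => s / lam <= phi x <= 1) * s) with
             (lam * (nu (fun x => s / lam <= phi x <= 1) * (s / lam))) by (field; lra).
           apply Rmult_le_compat_l; lra.
        -- assert (lam < s).
           { apply Rnot_le_lt in hsl. apply Rmult_lt_reg_r with (/ lam).
             apply Rinv_0_lt_compat; lra. replace (lam * / lam) with 1 by (field; lra). exact hsl. }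
           replace (fun x => s <= lam * phi x <= 1) with (@emptyset X).
           ++ rewrite h0. nra.
           ++ apply pred_ext; intros x; unfold emptyset; split; [tauto|]. intros [a b].
              pose proof (proj1 hp x). nra.
  - intros psi phi hps hph.
    pose proof (ups1_spec op hX nu psi hn hps) as [[s1 [hs1 e1]] hb1].
    pose proof (ups1_spec op hX nu phi hn hph) as [[s2 [hs2 e2]] hb2].
    apply (lX_unique nu (fun x => Rmax (psi x) (phi x))); [apply (ups1_spec op); auto; apply max_C; auto|].
    assert (E : forall s, (fun x => s <= Rmax (psi x) (phi x) <= 1) =
       setU (fun x => s <= psi x <= 1) (fun x => s <= phi x <= 1)).
    { intros s. apply pred_ext; intros x. unfold setU. pose proof (proj1 hps x). pose proof (proj1 hph x).
      unfold Rmax; destruct Rle_dec; split; intros; try lra;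
      destruct (Rle_dec s (psi x)); destruct (Rle_dec s (phi x)); try lra; intuition lra. }
    assert (E2 : forall s, nu (fun x => s <= Rmax (psi x) (phi x) <= 1) =
       Rmax (nu (fun x => s <= psi x <= 1)) (nu (fun x => s <= phi x <= 1))).
    { intros s. rewrite E. apply hU; apply Fs_closed; auto. }
    set (a := ups1 nu psi) in *. set (b := ups1 nu phi) in *.
    split.
    + destruct (Rle_dec b a).
      * exists s1. split; auto. rewrite E2. rewrite Rmax_left by lra.
        pose proof (hb2 s1 hs1).
        pose proof (hb _ (Fs_closed op psi s1 hps)). pose proof (hb _ (Fs_closed op phi s1 hph)).
        unfold Rmax at 1; destruct Rle_dec; nra.
      * exists s2. split; auto. rewrite E2. rewrite Rmax_right by lra.
        pose proof (hb1 s2 hs2).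
        pose proof (hb _ (Fs_closed op psi s2 hps)). pose proof (hb _ (Fs_closed op phi s2 hph)).
        unfold Rmax at 1; destruct Rle_dec; nra.
    + intros s hs. rewrite E2. pose proof (hb1 s hs). pose proof (hb2 s hs).
      unfold Rmax; repeat destruct Rle_dec; nra.
Qed.

Lemma ups_mono {X : Type} (op : (X->Prop)->Prop) ups (hS : in_SX op ups) f g :
  in_CXI op f -> in_CXI op g -> (forall x, f x <= g x) -> ups f <= ups g.
Proof.
  intros hf hg hle. destruct hS as [_ [_ [_ hM]]].
  assert (E : (fun x => Rmax (f x) (g x)) = g).
  { apply functional_extensionality; intros x; apply Rmax_right; auto. }
  pose proof (hM f g hf hg) as h. rewrite E in h. rewrite h. apply Rmax_l.
Qed.

Lemma ups_const {X : Type} (op : (X->Prop)->Prop) (hT : is_topology op) ups (hS : in_SX op ups) d :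
  0 <= d <= 1 -> ups (fun _ => d) = d.
Proof.
  intros hd. destruct hS as [_ [h1 [hH _]]].
  pose proof (hH d (fun _ => 1) hd (const_C op hT 1 ltac:(lra))) as h.
  simpl in h. rewrite h1 in h. replace (fun _ : X => d) with (fun _ : X => d * 1).
  - rewrite h; ring.
  - apply functional_extensionality; intros; ring.
Qed.

Definition SF {X : Type} (op : (X->Prop)->Prop) (ups : (X -> R) -> R) (F : X -> Prop) (y : R) : Prop :=
  exists g, in_CXI op g /\ (forall x, F x -> 1 <= g x) /\ y = ups g.

Definition is_inf (E : R -> Prop) (r : R) : Prop :=
  (forall y, E y -> r <= y) /\ (forall b, (forall y, E y -> b <= y) -> b <= r).

Definition nu2 {X : Type} (op : (X->Prop)->Prop) (ups : (X -> R) -> R) (F : X -> Prop) : R :=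
  epsilon (inhabits 0) (fun r => is_inf (SF op ups F) r).

Lemma nu2_spec {X : Type} (op : (X->Prop)->Prop) (hT : is_topology op) ups (hS : in_SX op ups) F :
  is_inf (SF op ups F) (nu2 op ups F).
Proof.
  unfold nu2. apply epsilon_spec.
  destruct (completeness (fun z => SF op ups F (- z))) as [m [hub hlub]].
  - exists 0. intros z [g [hg [_ e]]]. pose proof (proj1 hS g hg). lra.
  - exists (-1). exists (fun _ => 1). split; [apply const_C; auto; lra|]. split; [intros; lra|].
    rewrite (proj1 (proj2 hS)). ring.
  - exists (- m). split.
    + intros y hy. assert (- y <= m); [|lra]. apply hub. rewrite Ropp_involutive. auto.
    + intros b hb. assert (m <= - b); [|lra]. apply hlub. intros z hz. pose proof (hb _ hz). lra.
Qed.

Lemma nu2_le {X : Type} (op : (X->Prop)->Prop) (hT : is_topology op) ups (hS : in_SX op ups) F g :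
  in_CXI op g -> (forall x, F x -> 1 <= g x) -> nu2 op ups F <= ups g.
Proof. intros hg hF. apply (proj1 (nu2_spec op hT ups hS F)). exists g; auto. Qed.

Lemma nu2_approx {X : Type} (op : (X->Prop)->Prop) (hT : is_topology op) ups (hS : in_SX op ups) F e :
  e > 0 -> exists g, in_CXI op g /\ (forall x, F x -> 1 <= g x) /\ ups g < nu2 op ups F + e.
Proof.
  intros he. apply NNPP; intros hn.
  assert (nu2 op ups F + e <= nu2 op ups F); [|lra].
  apply (proj2 (nu2_spec op hT ups hS F)). intros y [g [hg [hF ->]]].
  destruct (Rle_dec (nu2 op ups F + e) (ups g)); auto. exfalso; apply hn. exists g; split; [exact hg|split; [exact hF|apply Rnot_le_lt in n; lra]].
Qed.

Lemma nu2_bounds {X : Type} (op : (X->Prop)->Prop) (hT : is_topology op) ups (hS : in_SX op ups) F :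
  0 <= nu2 op ups F <= 1.
Proof.
  split.
  - apply (proj2 (nu2_spec op hT ups hS F)). intros y [g [hg [_ ->]]]. apply (proj1 hS g hg).
  - rewrite <- (proj1 (proj2 hS)). apply nu2_le; auto. apply const_C; auto; lra. intros; lra.
Qed.

Lemma nu2_mono {X : Type} (op : (X->Prop)->Prop) (hT : is_topology op) ups (hS : in_SX op ups) F G :
  subset F G -> nu2 op ups F <= nu2 op ups G.
Proof.
  intros hFG. apply (proj2 (nu2_spec op hT ups hS G)). intros y [g [hg [hG ->]]].
  apply nu2_le; auto.
Qed.

Lemma clip_bound {X : Type} (op : (X->Prop)->Prop) (hT : is_topology op) ups (hS : in_SX op ups) B g r :
  in_CXI op g -> 0 < r <= 1 -> (forall x, B x -> r <= g x) -> nu2 op ups B * r <= ups g.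
Proof.
  intros hg hr hB.
  set (psi := fun x => Rmin 1 (g x / r)).
  assert (hpsi : in_CXI op psi) by (apply clip_C; auto; lra).
  assert (h1 : nu2 op ups B <= ups psi).
  { apply nu2_le; auto. intros x hx. specialize (hB x hx). unfold psi, Rmin. destruct Rle_dec; [lra|].
    exfalso. apply n. apply Rmult_le_reg_r with r; [lra|]. unfold Rdiv. rewrite Rmult_assoc, Rinv_l by lra. lra. }
  assert (h2 : ups (fun x => r * psi x) <= ups g).
  { apply (ups_mono op ups hS); auto. apply scale_C; auto; lra.
    intros x. unfold psi, Rmin. destruct Rle_dec as [h|h].
    - assert (r <= g x); [|lra]. apply Rmult_le_reg_r with (/ r). apply Rinv_0_lt_compat; lra.
      rewrite Rinv_r by lra. exact h.
    - right. field. lra. }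
  rewrite (proj1 (proj2 (proj2 hS)) r psi) in h2 by (auto; lra).
  nra.
Qed.

Lemma usc_core {X : Type} (op : (X->Prop)->Prop) (hT : is_topology op) ups (hS : in_SX op ups) F a :
  nu2 op ups F < a -> exists O, op O /\ subset F O /\ forall B, subset B O -> nu2 op ups B < a.
Proof.
  intros ha. destruct (nu2_approx op hT ups hS F (a - nu2 op ups F)) as [g [hg [hF hu]]]; [lra|].
  pose proof (proj1 hS g hg) as hr.
  assert (apos : 0 < a) by lra.
  set (r := (ups g / a + 1) / 2).
  assert (hq : ups g / a < 1). { apply Rmult_lt_reg_r with a; auto. unfold Rdiv; rewrite Rmult_assoc, Rinv_l; lra. }
  assert (hq0 : 0 <= ups g / a). { apply Rmult_le_pos; [lra|left; apply Rinv_0_lt_compat; lra]. }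
  assert (hra : ups g < r * a).
  { unfold r. replace ((ups g / a + 1) / 2 * a) with ((ups g + a) / 2) by (field; lra). lra. }
  exists (fun x => r < g x). split; [|split].
  - apply (proj2 hg (fun y => r < y)). apply gt_open.
  - intros x hx. specialize (hF x hx). unfold r; lra.
  - intros B hB. assert (0 < r <= 1) by (unfold r; lra).
    pose proof (clip_bound op hT ups hS B g r hg H ltac:(intros x hx; left; apply hB; auto)).
    nra.
Qed.

Lemma Rle_eps (x y : R) : (forall e, e > 0 -> x <= y + e) -> x <= y.
Proof. intros h. destruct (Rle_dec x y); auto. specialize (h ((x - y) / 2)). lra. Qed.

Lemma part2_poss {X : Type} (op : (X->Prop)->Prop) (hT : is_topology op) ups (hS : in_SX op ups) :
  is_possibility op (nu2 op ups).
Proof.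
  split; [split; [|split; [|split; [|split]]]|].
  - intros; apply nu2_bounds; auto.
  - apply Rle_antisym; [apply nu2_bounds; auto|].
    apply (proj2 (nu2_spec op hT ups hS fullset)). intros y [g [hg [hF ->]]].
    replace g with (fun _ : X => 1). { rewrite (proj1 (proj2 hS)); lra. }
    apply functional_extensionality; intros x. pose proof (proj1 hg x). specialize (hF x I). lra.
  - apply Rle_antisym; [|apply nu2_bounds; auto].
    rewrite <- (ups_const op hT ups hS 0) by lra. apply nu2_le; auto. apply const_C; auto; lra.
    intros x [].
  - intros; apply nu2_mono; auto.
  - intros F a _ ha. destruct (usc_core op hT ups hS F a ha) as [O [hO [hFO hB]]].
    exists O; repeat split; auto.
  - intros A B _ _. apply Rle_antisym.
    + apply Rle_eps. intros e he.
      destruct (nu2_approx op hT ups hS A e he) as [gA [hgA [hA uA]]].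
      destruct (nu2_approx op hT ups hS B e he) as [gB [hgB [hB uB]]].
      apply Rle_trans with (ups (fun x => Rmax (gA x) (gB x))).
      * apply nu2_le; auto. apply max_C; auto. intros x [hx|hx].
        -- specialize (hA x hx). eapply Rle_trans; [exact hA| apply Rmax_l].
        -- specialize (hB x hx). eapply Rle_trans; [exact hB| apply Rmax_r].
      * rewrite (proj2 (proj2 (proj2 hS))) by auto.
        unfold Rmax; repeat destruct Rle_dec; lra.
    + apply Rmax_lub; apply nu2_mono; auto; intros x hx; unfold setU; auto.
Qed.

Lemma pow_bounds (r : R) (n : nat) : 0 < r <= 1 -> 0 < r ^ n <= 1.
Proof. intros hr. induction n as [|n IH]; simpl; [lra|]. nra. Qed.

Lemma grid {X : Type} (op : (X->Prop)->Prop) (hT : is_topology op) ups (hS : in_SX op ups) phi :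
  in_CXI op phi -> forall e, e > 0 ->
  exists s, 0 < s <= 1 /\ nu2 op ups (fun x => s <= phi x <= 1) * s > ups phi - e.
Proof.
  intros hp e he. set (c := ups phi).
  apply NNPP; intros hn.
  assert (Hall : forall s, 0 < s <= 1 -> nu2 op ups (fun x => s <= phi x <= 1) * s <= c - e).
  { intros s hs. destruct (Rle_dec (nu2 op ups (fun x => s <= phi x <= 1) * s) (c - e)) as [|h]; auto.
    exfalso; apply hn; exists s; split; auto. apply Rnot_le_lt in h. lra. }
  assert (hc : 0 <= c <= 1) by (apply (proj1 hS); auto).
  assert (ce : e <= c).
  { pose proof (Hall 1 ltac:(lra)). pose proof (nu2_bounds op hT ups hS (fun x => 1 <= phi x <= 1)). lra. }
  set (r := 1 - e / 4).
  assert (hr : 0 < r < 1) by (unfold r; lra).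
  assert (Step : forall n : nat, exists H, in_CXI op H /\ ups H <= c - 3 * e / 4 /\
     forall x, r ^ (S n) <= phi x <= r ^ n -> r * phi x <= H x).
  { intros n. pose proof (pow_bounds r (S n) ltac:(lra)) as hpn.
    pose proof (pow_bounds r n ltac:(lra)) as hpn0.
    destruct (nu2_approx op hT ups hS (fun x => r ^ (S n) <= phi x <= 1) (e / 4 / r ^ (S n))) as [g [hg [hF hu]]].
    { apply Rdiv_lt_0_compat; lra. }
    exists (fun x => r ^ (S n) * g x). split; [apply scale_C; auto; lra|]. split.
    - rewrite (proj1 (proj2 (proj2 hS))) by (auto; lra).
      pose proof (Hall (r ^ (S n)) hpn).
      assert (ups g * r ^ S n < nu2 op ups (fun x => r ^ S n <= phi x <= 1) * r ^ S n + e / 4).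
      { replace (e / 4) with (e / 4 / r ^ S n * r ^ S n) by (field; lra).
        rewrite <- Rmult_plus_distr_r. apply Rmult_lt_compat_r; lra. }
      lra.
    - intros x [h1 h2]. pose proof (proj1 hp x). specialize (hF x ltac:(lra)).
      assert (r * phi x <= r ^ S n) by (simpl; apply Rmult_le_compat_l; lra).
      nra. }
  assert (Acc : forall N : nat, exists G, in_CXI op G /\ ups G <= c - 3 * e / 4 /\
     forall x, r ^ (S N) <= phi x -> r * phi x <= G x).
  { induction N as [|N IH].
    - destruct (Step 0%nat) as [H [hH [hu hle]]]. exists H; split; auto; split; auto.
      intros x hx. apply hle. split; auto. simpl. apply (proj1 hp x).
    - destruct IH as [G [hG [huG hleG]]]. destruct (Step (S N)) as [H [hH [hu hle]]].
      exists (fun x => Rmax (G x) (H x)). split; [apply max_C; auto|]. split.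
      + rewrite (proj2 (proj2 (proj2 hS))) by auto. unfold Rmax; destruct Rle_dec; lra.
      + intros x hx. destruct (Rle_dec (r ^ S N) (phi x)).
        * eapply Rle_trans; [apply hleG; auto| apply Rmax_l].
        * eapply Rle_trans; [apply hle; split; auto; lra| apply Rmax_r]. }
  destruct (pow_lt_1_zero r ltac:(rewrite Rabs_right; lra) (e / 4) ltac:(lra)) as [N hN].
  specialize (hN (S N) ltac:(lia)). rewrite Rabs_right in hN by (left; apply pow_bounds; lra).
  pose proof (pow_bounds r (S N) ltac:(lra)) as hpN.
  destruct (Acc N) as [G [hG [huG hleG]]].
  assert (hK : ups (fun x => r * phi x) <= ups (fun x => Rmax (G x) ((fun _ => r ^ S N) x))).
  { apply (ups_mono op ups hS). apply scale_C; auto; lra. apply max_C; auto. apply const_C; auto; lra.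
    intros x. destruct (Rle_dec (r ^ S N) (phi x)).
    - eapply Rle_trans; [apply hleG; auto| apply Rmax_l].
    - eapply Rle_trans; [|apply Rmax_r]. pose proof (proj1 hp x). nra. }
  rewrite (proj2 (proj2 (proj2 hS))) in hK by (auto; apply const_C; auto; lra).
  rewrite (proj1 (proj2 (proj2 hS))) in hK by (auto; lra).
  rewrite (ups_const op hT ups hS) in hK by lra.
  fold c in hK.
  assert (r * c >= c - e / 4) by (unfold r; nra).
  unfold Rmax in hK; destruct Rle_dec in hK; lra.
Qed.

Lemma part2_lX {X : Type} (op : (X->Prop)->Prop) (hX : compactum op) ups (hS : in_SX op ups) phi :
  in_CXI op phi -> lX_val (nu2 op ups) phi (ups phi).
Proof.
  intros hp. pose proof (proj1 hX) as hT.
  assert (H4 : forall s, 0 < s <= 1 -> nu2 op ups (fun x => s <= phi x <= 1) * s <= ups phi).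
  { intros s hs. apply clip_bound; auto. intros x [h _]; auto. }
  split; auto.
  apply (attain (fun s => nu2 op ups (fun x => s <= phi x <= 1))).
  - intros; apply nu2_bounds; auto.
  - intros s t hst ht. apply nu2_mono; auto. intros x hx; lra.
  - intros s0 d hs0 hd.
    destruct (usc_core op hT ups hS (fun x => s0 <= phi x <= 1) (nu2 op ups (fun x => s0 <= phi x <= 1) + d))
      as [O [hO [hFO hB]]]; [lra|].
    destruct (cpt_lemma op hX phi s0 O hp hs0 hO hFO) as [t [ht hFt]].
    exists t; split; auto.
  - exact H4.
  - apply grid; auto.
Qed.

Theorem theorem3 (X : Type) (op : (X -> Prop) -> Prop) (hX : compactum op) :
  (forall nu, is_possibility op nu ->
     exists ups, in_SX op ups /\
       forall phi, in_CXI op phi -> lX_val nu phi (ups phi)) /\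
  (forall ups, in_SX op ups ->
     exists nu, is_possibility op nu /\
       forall phi, in_CXI op phi -> lX_val nu phi (ups phi)).
Proof.
  split.
  - intros nu hn. exists (ups1 nu). split.
    + apply (part1 op hX); auto.
    + intros phi hp. apply (ups1_spec op hX); auto.
  - intros ups hS. exists (nu2 op ups). split.
    + apply part2_poss; auto. exact (proj1 hX).
    + intros phi hp. apply part2_lX; auto.
Qed.
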